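(* Let $j,k,\ell$ be integers with $3\leq j+2\leq\ell\leq k$, and let $G$ be a graph on $n$ vertices with minimum degree $\delta(G)>\frac{(k-1)n}{k}$ and at least two $K_{k+1}$-components. Suppose $G$ does not contain the configuration $(\dagger^{(p)})^k_q$ for all pairs $p,q$ of positive integers such that $p<q<\ell$, or such that $j<p<q=\ell$. Then $G$ does not contain the configuration $(\dagger^{(j)})^k_\ell$.
   Context: A $K_{k+1}$-walk in $G$ is a sequence of copies of $K_k$ in which consecutive copies lie in a common copy of $K_{k+1}$; the endpoints are then $K_{k+1}$-connected, and the equivalence classes of copies of $K_k$ are the $K_{k+1}$-components. For integers $1\leq j<\ell\leq k$, $G$ contains the configuration $(\dagger^{(j)})^k_\ell$ if there are (not necessarily distinct) vertices $u_1,\dots,u_k$, $v_{j+1},\dots,v_\ell$ and $w_{p1},\dots,w_{p(\ell-1)}$ for $j<p\leq\ell$ such that: (CG1) $u_1\dots u_k$ is a copy of $K_k$ lying in some $K_{k+1}$-component $C$ of $G$; (CG2) $u_1\dots u_jv_{j+1}\dots v_\ell u_{\ell+1}\dots u_k$ is a copy of $K_k$ in $G$ not in $C$; (CG3) for every $j<p\leq\ell$, $u_pw_{p1}\dots w_{p(\ell-1)}u_{\ell+1}\dots u_k$ is a copy of $K_k$ in $G$ not in $C$. *)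

(* Defs.v *)
From mathcomp Require Import all_boot.
Set Implicit Arguments. Unset Strict Implicit. Unset Printing Implicit Defensive.

(* A simple graph: vertex type V : finType, adjacency adj : rel V, assumed
   symmetric and irreflexive in the theorem. *)

Section Defs.
Variables (V : finType) (adj : rel V).

Definition is_clique (A : {set V}) : bool :=
  [forall x in A, forall y in A, (x != y) ==> adj x y].

Definition is_Kcopy (r : nat) (A : {set V}) : bool :=
  (#|A| == r) && is_clique A.

Definition seq_Kcopy (r : nat) (s : seq V) : bool :=
  [&& uniq s, size s == r & is_clique [set x in s]].

Definition Kwalk_step (k : nat) : rel {set V} := fun A B =>
  [&& is_Kcopy k A, is_Kcopy k B &
      [exists K : {set V}, [&& is_Kcopy k.+1 K, A \subset K & B \subset K]]].

Definition Kconnected (k : nat) (A B : {set V}) : bool :=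
  connect (Kwalk_step k) A B.

Definition two_Kcomponents (k : nat) : Prop :=
  exists A B : {set V}, [/\ is_Kcopy k A, is_Kcopy k B & ~~ Kconnected k A B].

Definition deg (x : V) : nat := #|[set y | adj x y]|.

(* vertices indexed by naturals; idx a b = [a, a+1, ..., b] *)
Definition idx (a b : nat) : seq nat := iota a (b.+1 - a).

Definition config (j k l : nat) : Prop :=
  exists (u v : nat -> V) (w : nat -> nat -> V),
    let U := map u (idx 1 k) in
    let S2 := map u (idx 1 j) ++ map v (idx j.+1 l) ++ map u (idx l.+1 k) in
    let S3 p := u p :: map (w p) (idx 1 l.-1) ++ map u (idx l.+1 k) in
    [/\ seq_Kcopy k U,
        seq_Kcopy k S2 /\ ~~ Kconnected k [set x in U] [set x in S2] &
        forall p, j < p <= l ->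
          seq_Kcopy k (S3 p) /\ ~~ Kconnected k [set x in U] [set x in S3 p]].

End Defs.

(* Main.v *)
Require Import Defs.
From mathcomp Require Import all_boot zify.
Set Implicit Arguments. Unset Strict Implicit. Unset Printing Implicit Defensive.

Lemma map_shift (T : Type) (x0 : T) (s : seq T) c n :
  size s = n ->
  map (fun i => nth x0 s (i - c)) (iota c n) = s.
Proof.
move=> Hs; have -> : iota c n = map (addn c) (iota 0 n) by rewrite -iotaDl addn0.
rewrite -map_comp.
rewrite (eq_map (g := nth x0 s)); last by move=> i /=; rewrite addKn.
have := @map_nth_iota0 _ x0 s n; rewrite Hs leqnn => /(_ isT) ->.
by rewrite take_oversize ?Hs.
Qed.

Lemma fill (V : finType) (pre suf : seq V) (Z : {set V}) :
  uniq (pre ++ suf) -> [set x in pre ++ suf] \subset Z ->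
  uniq (pre ++ enum (Z :\: [set x in pre ++ suf]) ++ suf) /\
  [set x in pre ++ enum (Z :\: [set x in pre ++ suf]) ++ suf] = Z.
Proof.
move=> Hu Hsub; split.
  set t := enum _.
  have /perm_uniq -> : perm_eq (pre ++ t ++ suf) (t ++ pre ++ suf) by rewrite perm_catCA.
  rewrite cat_uniq enum_uniq Hu andbT /=.
  by apply/hasPn => x; rewrite /t mem_enum !inE => ->.
apply/setP => x; rewrite !inE !mem_cat mem_enum !inE.
case Hp: (x \in pre); first by symmetry; apply: (subsetP Hsub); rewrite inE mem_cat Hp.
case Hs: (x \in suf); first by rewrite orbT; symmetry; apply: (subsetP Hsub); rewrite inE mem_cat Hs orbT.
by rewrite /= mem_cat Hp Hs /= orbF.
Qed.

Lemma seqK_of (V : finType) (adj : rel V) k (s : seq V) (Z : {set V}) :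
  uniq s -> [set x in s] = Z -> is_Kcopy adj k Z -> seq_Kcopy adj k s.
Proof.
move=> Hu HZ /andP[/eqP Hc Hcl]; rewrite /seq_Kcopy Hu HZ Hcl andbT /=.
have /card_uniqP Hcu := Hu.
by rewrite -Hcu -cardsE HZ Hc.
Qed.

Lemma Kcopy_of_seq (V : finType) (adj : rel V) k (s : seq V) :
  seq_Kcopy adj k s -> is_Kcopy adj k [set x in s].
Proof.
case/and3P => Hu /eqP Hs Hcl; rewrite /is_Kcopy Hcl andbT cardsE.
have /card_uniqP Hcu := Hu.
by rewrite Hcu Hs.
Qed.

Lemma map_shift2 (T : Type) (x0 : T) (s : seq T) c m n :
  n <= size s - m ->
  map (fun i => nth x0 s (i - c)) (iota (c + m) n) = take n (drop m s).
Proof.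
move=> Hn; rewrite iotaDl -map_comp.
rewrite (eq_map (g := nth x0 s)); last by move=> i /=; rewrite addKn.
by have := @map_nth_iota _ x0 s m n Hn.
Qed.

Lemma idx1 n : idx 1 n = iota 1 n.
Proof. by rewrite /idx subSS subn0. Qed.

Lemma idxS a b : idx a.+1 b = iota a.+1 (b - a).
Proof. by rewrite /idx subSS. Qed.

Lemma mk_config (V : finType) (adj : rel V) (p k q : nat) (x0 : V) (s : seq V) :
  0 < p -> p <= q -> q <= k -> seq_Kcopy adj k s ->
  (exists Z, [&& is_Kcopy adj k Z, [set x in take p s ++ drop q s] \subset Z
      & ~~ Kconnected adj k [set x in s] Z]) ->
  (forall i, p < i <= q -> exists Z, [&& is_Kcopy adj k Z, nth x0 s i.-1 \in Z,
      [set x in drop q s] \subset Z & ~~ Kconnected adj k [set x in s] Z]) ->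
  config adj p k q.
Proof.
move=> Hp Hpq Hqk Hs [Z2 /and3P[HZ2 HsZ2 HnZ2]] H3.
have Hsz : size s = k by case/and3P: Hs => _ /eqP.
have Hus : uniq s by case/and3P: Hs.
pose t := enum (Z2 :\: [set x in take p s ++ drop q s]).
pose P i Z := [&& is_Kcopy adj k Z, nth x0 s i.-1 \in Z,
      [set x in drop q s] \subset Z & ~~ Kconnected adj k [set x in s] Z].
pose Zf i := odflt set0 [pick Z | P i Z].
have HZf : forall i, p < i <= q -> P i (Zf i).
  move=> i Hi; rewrite /Zf; case: pickP => [Z HZ|H0] //=.
  by have [Z HZ] := H3 i Hi; move: (H0 Z); rewrite /P HZ.
pose tw i := enum (Zf i :\: [set x in nth x0 s i.-1 :: drop q s]).
exists (fun i => nth x0 s (i - 1)), (fun i => nth x0 t (i - p.+1)),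
  (fun i jj => nth x0 (tw i) (jj - 1)).
have Eu : forall m n, m + n <= k ->
    map (fun i => nth x0 s (i - 1)) (iota (1 + m) n) = take n (drop m s).
  by move=> m n Hmn; apply: map_shift2; rewrite Hsz; lia.
have EU : map (fun i => nth x0 s (i - 1)) (idx 1 k) = s.
  by rewrite idx1 -[1]addn0 Eu ?addn0 // drop0 take_oversize ?Hsz.
have EA : map (fun i => nth x0 s (i - 1)) (idx 1 p) = take p s.
  by rewrite idx1 -[1]addn0 Eu ?drop0 //; lia.
have ER : map (fun i => nth x0 s (i - 1)) (idx q.+1 k) = drop q s.
  rewrite idxS -add1n Eu; last by lia.
  by rewrite take_oversize // size_drop Hsz.
have Hu2 : uniq (take p s ++ drop q s).
  apply: subseq_uniq Hus; rewrite -{3}(cat_take_drop p s).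
  apply: cat_subseq => //.
  have -> : q = (q - p) + p by lia.
  by rewrite -drop_drop drop_subseq.
have [Hu2' Hset2] := fill Hu2 HsZ2.
have Ht : size t = q - p.
  have : size (take p s ++ t ++ drop q s) = k.
    have /card_uniqP <- := Hu2'. by rewrite -cardsE Hset2; case/andP: HZ2 => /eqP.
  rewrite !size_cat size_takel ?Hsz; last by lia.
  by rewrite size_drop Hsz; lia.
have EV : map (fun i => nth x0 t (i - p.+1)) (idx p.+1 q) = t.
  by rewrite idxS map_shift.
have H3s : forall i, p < i <= q ->
   uniq (nth x0 s i.-1 :: tw i ++ drop q s) /\ [set x in nth x0 s i.-1 :: tw i ++ drop q s] = Zf i /\ size (tw i) = q.-1.
  move=> i Hi; have /and4P[HK Hin Hsub Hnc] := HZf i Hi.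
  have Hu3 : uniq ([:: nth x0 s i.-1] ++ drop q s).
    rewrite /= drop_uniq // andbT; move: Hus; rewrite -{1}(cat_take_drop q s) cat_uniq.
    case/and3P => _ /hasPn Hh _.
    apply/negP => Hd; have /negP := Hh _ Hd; apply.
    rewrite -(@nth_take q); last by lia.
    have Hlt : i.-1 < size (take q s).
      rewrite size_takel; last by rewrite Hsz.
      move: Hi => /andP[H1 H2]; have Hi0 : 0 < i by apply: leq_ltn_trans (leq0n p) H1.
      by rewrite prednK.
    exact: (mem_nth x0 Hlt).
  have Hsub3 : [set x in [:: nth x0 s i.-1] ++ drop q s] \subset Zf i.
    apply/subsetP => x; rewrite inE mem_cat inE => /orP[/eqP -> //|Hx].
    by apply: (subsetP Hsub); rewrite inE.
  have [Hu3' Hset3] := fill Hu3 Hsub3.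
  split => //; split => //.
  have : size ([:: nth x0 s i.-1] ++ tw i ++ drop q s) = k.
    have /card_uniqP <- := Hu3'. by rewrite -cardsE Hset3; case/andP: HK => /eqP.
  rewrite !size_cat size_drop Hsz /=; move: (size (tw i)) => n; move: Hqk Hi; clear; lia.
cbv zeta; rewrite EU EA EV ER; split => //.
  split; last by rewrite Hset2.
  exact: seqK_of Hu2' Hset2 HZ2.
move=> i Hi; have [Hu3 [Hset3 Hsz3]] := H3s i Hi.
have /and4P[HK _ _ Hnc] := HZf i Hi.
rewrite idx1 map_shift // subn1.
split; last by rewrite Hset3.
exact: seqK_of Hu3 Hset3 HK.
Qed.

Lemma card_has_le (V : finType) (f : V -> {set V}) (xs : seq V) :
  #|[set y | has (fun x => y \in f x) xs]| <= sumn (map (fun x => #|f x|) xs).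
Proof.
elim: xs => [|x xs IH] /=.
  by rewrite leqn0 cards_eq0; apply/eqP/setP => y; rewrite !inE.
have -> : [set y | (y \in f x) || has (fun x0 => y \in f x0) xs] =
          f x :|: [set y | has (fun x => y \in f x) xs].
  by apply/setP => y; rewrite !inE.
rewrite cardsU; apply: leq_trans (leq_subr _ _) _; exact: leq_add.
Qed.

Lemma common_nbr (V : finType) (adj : rel V) (k : nat) (S : {set V}) :
  0 < #|V| ->
  (forall x : V, (k - 1) * #|V| < k * deg adj x) -> #|S| <= k ->
  exists y, forall x, x \in S -> adj x y.
Proof.
move=> Hn Hdeg HS.
pose NN x := [set y | ~~ adj x y].
have HNN : forall x, k * #|NN x| < #|V|.
  move=> x; have := Hdeg x; have := cardsC [set y | adj x y].
  have -> : ~: [set y | adj x y] = NN x by apply/setP => y; rewrite !inE.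
  rewrite /deg; move: #|NN x| #|[set y | adj x y]| => a b; nia.
have Hk : 0 < k.
  case/card_gt0P: Hn => x _; move: (Hdeg x); clear.
  by case: k => //; rewrite sub0n !mul0n ltnn.
have Hsum : forall xs : seq V, k * sumn (map (fun x => #|NN x|) xs) <= size xs * #|V|.-1.
  elim => [|x xs IH] /=; first by rewrite muln0.
  rewrite mulnDr mulSn; apply: leq_add => //.
  by rewrite -ltnS prednK // HNN.
have Hle := card_has_le NN (enum S).
have Hs := Hsum (enum S).
rewrite -cardE in Hs.
have Hlt : #|[set y | has (fun x => y \in NN x) (enum S)]| < #|V|.
  apply: leq_ltn_trans Hle _.
  have : k * sumn [seq #|NN x| | x <- enum S] <= k * #|V|.-1.
    apply: leq_trans Hs _; exact: leq_mul.
  rewrite leq_pmul2l // => H; apply: leq_ltn_trans H _; by rewrite prednK.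
have [y Hy] : exists y, y \notin [set y | has (fun x => y \in NN x) (enum S)].
  apply/existsP; rewrite -negb_forall; apply/negP => /forallP Hall.
  have : [set y | has (fun x => y \in NN x) (enum S)] = setT.
    by apply/setP => z; rewrite Hall inE.
  by move=> E; move: Hlt; rewrite E cardsT ltnn.
exists y => x Hx; move: Hy; rewrite inE => /hasPn /(_ x).
by rewrite mem_enum Hx inE negbK => /(_ isT).
Qed.

Lemma Kstep_sym (V : finType) (adj : rel V) k : symmetric (Kwalk_step adj k).
Proof.
move=> A B; rewrite /Kwalk_step.
apply/and3P/and3P => -[h1 h2 /existsP[K /and3P[c1 c2 c3]]]; split => //;
  apply/existsP; exists K; by rewrite c1 c2 c3.
Qed.

Lemma Kconn_sym (V : finType) (adj : rel V) k A B :
  Kconnected adj k A B = Kconnected adj k B A.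
Proof. exact: (sym_connect_sym (Kstep_sym adj k)). Qed.

Lemma Kconn_trans (V : finType) (adj : rel V) k A B C :
  Kconnected adj k A B -> Kconnected adj k B C -> Kconnected adj k A C.
Proof. exact: connect_trans. Qed.

Lemma clq (V : finType) (adj : rel V) (S : {set V}) x y :
  is_clique adj S -> x \in S -> y \in S -> x != y -> adj x y.
Proof.
move=> /forallP H Hx Hy Hxy; have := H x; rewrite Hx /= => /forallP /(_ y).
by rewrite Hy Hxy.
Qed.

Lemma clique_sub (V : finType) (adj : rel V) (A B : {set V}) :
  A \subset B -> is_clique adj B -> is_clique adj A.
Proof.
move=> /subsetP HAB HB; apply/forallP => x; apply/implyP => Hx.
apply/forallP => y; apply/implyP => Hy; apply/implyP.
by apply: clq HB (HAB _ Hx) (HAB _ Hy).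
Qed.

Lemma clique_add (V : finType) (adj : rel V) (S : {set V}) y :
  symmetric adj -> is_clique adj S -> (forall z, z \in S -> z != y -> adj z y) ->
  is_clique adj (y |: S).
Proof.
move=> Hsym HS Hy; apply/forallP => x; apply/implyP; rewrite in_setU1 => Hx.
apply/forallP => z; apply/implyP; rewrite in_setU1 => Hz; apply/implyP => Hxz.
case/orP: Hx => [/eqP Ex|Hx]; case/orP: Hz => [/eqP Ez|Hz].
- by rewrite Ex Ez eqxx in Hxz.
- by rewrite Ex Hsym; apply: Hy => //; rewrite eq_sym -Ex.
- by rewrite Ez; apply: Hy => //; rewrite -Ez.
- exact: clq HS Hx Hz Hxz.
Qed.

Theorem lemma5p1 (V : finType) (adj : rel V) (j k l : nat) :
  symmetric adj -> irreflexive adj ->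
  3 <= j + 2 <= l -> l <= k ->
  (forall x : V, (k - 1) * #|V| < k * deg adj x) ->
  two_Kcomponents adj k ->
  (forall p q : nat, 0 < p ->
     (p < q < l) \/ (j < p /\ p < q /\ q = l) -> ~ config adj p k q) ->
  ~ config adj j k l.
Proof.
move=> Hsym Hirr /andP[Hj Hjl] Hlk Hdeg _ Hforb [u [v [w]]].
cbv zeta; move=> [HU [HS2 HnS2] H3].
have [Ar1 Ar2] : 0 < l.-1 /\ (j < l.-1 /\ l.-1 < l /\ l = l) by lia.
have Ar3 : l - l.-1 = 1 by lia.
have [Ar4 [Ar5 [Ar6 Ar7]]] : 1 < l - j /\ (l - j < l /\ (1 <= l - j /\ l - j <= k)) by lia.
set s0 := map u (idx 1 k) in HU HnS2 H3.
set a := map u (idx 1 j) in HS2 HnS2.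
set r := map u (idx l.+1 k) in HS2 HnS2 H3.
set vs := map v (idx j.+1 l) in HS2 HnS2.
set bq := map u (idx j.+1 l).
have Hs0 : s0 = a ++ bq ++ r.
  rewrite /s0 /a /bq /r idx1 !idxS -!map_cat; congr (map u _).
  rewrite [in RHS](_ : l.+1 = 1 + j + (l - j)); last by lia.
  rewrite [in RHS](_ : j.+1 = 1 + j); last by lia.
  rewrite -!iotaD subn0 -iotaD; congr (iota 1 _); lia.
have Hsa : size a = j by rewrite /a size_map idx1 size_iota.
have Hsr : size r = k - l by rewrite /r size_map idxS size_iota.
have Hsvs : size vs = l - j by rewrite /vs size_map idxS size_iota.
have Hus0 : uniq s0 by case/and3P: HU.
have Hur : uniq r by move: Hus0; rewrite Hs0 !cat_uniq => /and3P[_ _ /and3P[]].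
set Uset := [set x in s0] in HnS2 H3.
set S2set := [set x in a ++ vs ++ r] in HnS2.
pose x0 := u 1.
have Hn0 : 0 < #|V| by apply/card_gt0P; exists x0.
have HpermS2 : perm_eq (a ++ vs ++ r) (vs ++ a ++ r) by rewrite perm_catCA.
have HuS2 : uniq (a ++ vs ++ r) by case/and3P: HS2.
have HuS2' : uniq (vs ++ a ++ r) by rewrite -(perm_uniq HpermS2).
have HsetS2 : [set x in vs ++ a ++ r] = S2set.
  by apply/setP => x; rewrite !inE !mem_cat orbCA.
have HKS2 : is_Kcopy adj k S2set := Kcopy_of_seq HS2.
pose esc x := [exists Z, [&& is_Kcopy adj k Z, x \in Z,
   [set y in a ++ r] \subset Z & ~~ Kconnected adj k S2set Z]].
have [vst Hvin Hvst] : exists2 vst, vst \in vs & ~~ esc vst.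
  case: (boolP [forall (x | x \in vs), esc x]) => [Hall|]; last first.
    by rewrite negb_forall_in => /exists_inP[x Hx Hn]; exists x.
  exfalso; apply: (Hforb 1 (l - j) isT); first by left; rewrite Ar4 Ar5.
  have Hq1 : 1 < size vs by rewrite Hsvs.
  apply: (@mk_config _ adj 1 k (l - j) x0 (vs ++ a ++ r)) => //.
  - exact: (seqK_of HuS2' HsetS2 HKS2).
  - have Ht1 : take 1 (vs ++ a ++ r) = [:: nth x0 vs 0].
      rewrite take_cat Hq1.
      by case: (vs) Hq1 => [|x1 t] //= _; rewrite take0.
    have H0 : 0 < size vs by rewrite (ltn_trans _ Hq1).
    have Hx1 : nth x0 vs 0 \in vs := mem_nth x0 H0.
    have := forall_inP Hall _ Hx1 => /existsP[Z] /and4P[HZ Hx1Z Hsub Hnc].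
    exists Z; rewrite HZ HsetS2 Hnc andbT /= Ht1 drop_size_cat //.
    apply/subsetP => y; rewrite !inE => /orP[/eqP->//|Hy].
    by apply: (subsetP Hsub); rewrite inE.
  - move=> i Hi.
    have Hi' : i.-1 < size vs by rewrite Hsvs; clear -Hi; lia.
    have Hxi : nth x0 (vs ++ a ++ r) i.-1 \in vs by rewrite nth_cat Hi' mem_nth.
    have := forall_inP Hall _ Hxi => /existsP[Z] /and4P[HZ Hx1 Hsub Hnc].
    exists Z; rewrite HZ Hx1 HsetS2 Hnc andbT /=.
    by rewrite drop_size_cat.
have KV : forall Z, is_Kcopy adj k Z -> vst \in Z -> [set y in a ++ r] \subset Z ->
    ~~ Kconnected adj k Uset Z.
  move=> Z HZ Hv Hsub; apply/negP => HUZ.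
  move: Hvst; rewrite negb_exists => /forallP /(_ Z); rewrite HZ Hv Hsub /= negbK => HSZ.
  move: HnS2; rewrite (Kconn_trans HUZ _) //; by rewrite Kconn_sym.
have Hvnot : vst \notin a ++ r.
  move: HuS2'; rewrite cat_uniq => /and3P[_ /hasPn Hh _].
  by apply/negP => Hv; have := Hh _ Hv; rewrite Hvin.
have Hvadj : forall y, y \in a ++ r -> adj y vst.
  move=> y Hy; apply: (clq (S := S2set)); first by case/andP: HKS2.
  - by rewrite -HsetS2 inE mem_cat Hy orbT.
  - by rewrite -HsetS2 inE mem_cat Hvin.
  - by apply/negP => /eqP E; move: Hvnot; rewrite -E Hy.
have G : forall X Y b, is_Kcopy adj k X -> is_Kcopy adj k Y -> [set y in r] \subset X ->
    b \in X -> b \notin r -> X :\ b \subset Y ->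
    (exists Zb, [&& is_Kcopy adj k Zb, b \in Zb, [set y in r] \subset Zb
                  & ~~ Kconnected adj k X Zb]) ->
    Kconnected adj k X Y.
  move=> X Y b HX HY HrX HbX Hbr HXY [Zb HZb].
  apply/negPn/negP => HnXY.
  apply: (Hforb l.-1 l Ar1); first by right.
  pose e := enum (X :\: [set y in r] :\ b).
  have Hue : uniq (e ++ b :: r).
    rewrite cat_uniq enum_uniq /= Hbr Hur andbT /= negb_or.
    rewrite /e mem_enum !inE eqxx /= andbT.
    by apply/hasPn => y Hy; rewrite mem_enum !inE Hy andbF.
  have Hse : [set y in e ++ b :: r] = X.
    apply/setP => y; rewrite !inE mem_cat mem_enum !inE.
    case: (eqVneq y b) => [->|Hyb] /=; first by rewrite HbX.
    case Hyr: (y \in r) => /=; last by rewrite orbF.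
    by symmetry; apply: (subsetP HrX); rewrite inE.
  have Hks : seq_Kcopy adj k (e ++ b :: r) := seqK_of Hue Hse HX.
  have Hsze : size e = l.-1.
    have : size (e ++ b :: r) = k by case/and3P: Hks => _ /eqP.
    rewrite size_cat /= Hsr; move: (size e) => n; move: Hlk Hjl; clear; lia.
  apply: (@mk_config _ adj l.-1 k l x0 (e ++ b :: r)) => //; first exact: leq_pred.
  - exists Y; rewrite HY Hse HnXY andbT /= take_size_cat //.
    rewrite drop_cat Hsze ltnNge leq_pred /=.
    rewrite Ar3.
    rewrite drop1 /=.
    apply/subsetP => y; rewrite inE mem_cat => Hy; apply: (subsetP HXY).
    case/orP: Hy => Hy.
      by move: Hy; rewrite mem_enum !inE => /andP[-> /andP[_ ->]].
    rewrite !inE; apply/andP; split.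
      by apply/negP => /eqP E; move: Hbr; rewrite -E Hy.
    by apply: (subsetP HrX); rewrite inE.
  - move=> i Hi; have -> : i = l by clear -Hi Ar1; lia.
    exists Zb; rewrite Hse nth_cat Hsze ltnn subnn /=.
    by rewrite drop_cat Hsze ltnNge leq_pred /= Ar3 drop1 /=.
have HrA : [set y in r] \subset [set y in a ++ r].
  by apply/subsetP => y; rewrite !inE mem_cat => ->; rewrite orbT.
have main : forall d (X : {set V}), #|[set x in X | ~~ adj x vst]| = d -> is_Kcopy adj k X ->
    Kconnected adj k Uset X -> [set y in a ++ r] \subset X ->
    (forall x, x \in X -> ~~ adj x vst -> exists Zb, [&& is_Kcopy adj k Zb, x \in Zb,
        [set y in r] \subset Zb & ~~ Kconnected adj k Uset Zb]) -> False.
  elim=> [|d IH] X Hd HX HUX HaX Hesc.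
    have Hall : forall x, x \in X -> adj x vst.
      move=> x Hx; apply/negPn/negP => Hn.
      by move/eqP: Hd; rewrite cards_eq0 => /eqP /setP /(_ x); rewrite !inE Hx Hn.
    have HXcl : is_clique adj X by case/andP: HX.
    have HXk : #|X| = k by case/andP: HX => /eqP.
    case: (boolP (vst \in X)) => HvX.
      by move: (KV X HX HvX HaX); rewrite HUX.
    have : ~~ (X \subset [set y in a ++ r]).
      apply/negP => /subset_leq_card; rewrite cardsE HXk => H1.
      have := leq_trans H1 (card_size (a ++ r)); rewrite size_cat Hsa Hsr.
      by move: Hlk Hjl; clear; lia.
    case/subsetPn => x Hx Hxn.
    pose Y := vst |: (X :\ x).
    have HY : is_Kcopy adj k Y.
      apply/andP; split.
        rewrite cardsU1 in_setD1 (negbTE HvX) andbF /=.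
        by move: HXk; rewrite (cardsD1 x) Hx => <-.
      apply: clique_add => //; first exact: clique_sub (subsetDl _ _) HXcl.
      by move=> z; rewrite in_setD1 => /andP[_ Hz] _; apply: Hall.
    have Hstep : Kwalk_step adj k X Y.
      rewrite /Kwalk_step HX HY /=; apply/existsP; exists (vst |: X).
      apply/and3P; split.
      - apply/andP; split; first by rewrite cardsU1 HvX HXk.
        by apply: clique_add => // z Hz _; apply: Hall.
      - exact: subsetUr.
      - by apply: setUS; exact: subsetDl.
    have HUY := Kconn_trans HUX (connect1 Hstep).
    have HaY : [set y in a ++ r] \subset Y.
      apply/subsetP => y Hy; apply: setU1r; rewrite in_setD1 (subsetP HaX _ Hy) andbT.
      by apply/negP => /eqP E; move: Hxn; rewrite -E Hy.
    by move: (KV Y HY (setU11 _ _) HaY); rewrite HUY.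
  have HXcl : is_clique adj X by case/andP: HX.
  have HXk : #|X| = k by case/andP: HX => /eqP.
  have [b Hb] : exists b, b \in [set x in X | ~~ adj x vst].
    by apply/card_gt0P; rewrite Hd.
  move: (Hb); rewrite inE => /andP[HbX Hbv].
  have HXb : #|X :\ b| = k.-1 by move: HXk; rewrite (cardsD1 b) HbX => <-.
  have Hcard : #|vst |: (X :\ b)| <= k.
    rewrite cardsU1 HXb; case: (vst \notin X :\ b) => /=.
      have Hk0 : 0 < k by rewrite -HXk; apply/card_gt0P; exists b.
      by rewrite add1n prednK.
    by rewrite add0n leq_pred.
  have [y Hy] := common_nbr Hn0 Hdeg Hcard.
  have Hyv : adj vst y by apply: Hy; exact: setU11.
  have HyXb : y \notin X :\ b.
    by apply/negP => H; have := Hy y (setU1r _ H); rewrite Hirr.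
  have Hyb : y != b.
    by apply/negP => /eqP E; move: Hbv; rewrite -E Hsym Hyv.
  have HyX : y \notin X.
    by apply/negP => H; move: HyXb; rewrite in_setD1 Hyb H.
  pose Y := y |: (X :\ b).
  have HY : is_Kcopy adj k Y.
    apply/andP; split; first by rewrite cardsU1 HyXb HXb /= add1n -HXk (cardsD1 b) HbX.
    apply: clique_add => //; first exact: clique_sub (subsetDl _ _) HXcl.
    by move=> z Hz _; apply: Hy; apply: setU1r.
  have Hbar : b \notin a ++ r.
    by apply/negP => H; move: Hbv; rewrite Hvadj.
  have Hbr : b \notin r by apply/negP => H; move: Hbar; rewrite mem_cat H orbT.
  have HXY : Kconnected adj k X Y.
    apply: (G X Y b) => //.
    - exact: subset_trans HrA HaX.
    - exact: subsetUr.
    - have [Zb /and4P[H1 H2 H3' H4]] := Hesc b HbX Hbv.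
      exists Zb; rewrite H1 H2 H3' /=; apply/negP => HXZ.
      by move: H4; rewrite (Kconn_trans HUX HXZ).
  apply: (IH Y) => //.
  - have -> : [set x in Y | ~~ adj x vst] = [set x in X | ~~ adj x vst] :\ b.
      apply/setP => z; rewrite !inE.
      case: (eqVneq z y) => [->|Hzy] /=; first by rewrite Hsym Hyv /= !andbF.
      by rewrite andbA.
    by move: Hd; rewrite (cardsD1 b) Hb => -[].
  - exact: Kconn_trans HUX HXY.
  - apply/subsetP => z Hz; apply: setU1r; rewrite in_setD1 (subsetP HaX _ Hz) andbT.
    by apply/negP => /eqP E; move: Hbar Hz; rewrite -E inE => /negP.
  - move=> x; rewrite in_setU1 => /orP[/eqP ->|]; first by rewrite Hsym Hyv.
    by rewrite in_setD1 => /andP[_ Hx]; apply: Hesc.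
apply: (main _ Uset erefl (Kcopy_of_seq HU) (connect0 _ _)).
  by apply/subsetP => y; rewrite !inE Hs0 !mem_cat => /orP[->|->]; rewrite ?orbT.
move=> x; rewrite inE Hs0 !mem_cat => Hx Hxv.
have Hxb : x \in bq.
  case/or3P: Hx => // Hx; move: Hxv; rewrite Hvadj //; rewrite mem_cat Hx ?orbT //.
case/mapP: Hxb => p Hp ->.
move: Hp; rewrite idxS mem_iota => Hp.
have Hp' : j < p <= l by move: Hp; clear; lia.
have [HK3 Hn3] := H3 p Hp'.
exists [set x in u p :: map (w p) (idx 1 l.-1) ++ r].
rewrite (Kcopy_of_seq HK3) Hn3 inE mem_head andbT /=.
by apply/subsetP => y; rewrite !inE mem_cat => ->; rewrite !orbT.
Qed.
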